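(* Let $N\ge1$, let $L_1,\dots,L_N$, $K_1,\dots,K_N$ be positive integers with $K_n\le L_n$, let $P$ be a positive integer, and let $H$ be a TTM-tree (as defined in the context) with $|H|$ nodes. Let $\psi(P,N)$ be the number of ordered $N$-tuples of positive integers whose product is $P$. There is a dynamic-programming algorithm that computes a dynamic grid scheme for $H$ of minimum total communication volume (over all dynamic grid schemes using valid grids), using $O(|H|\cdot\psi(P,N))$ dynamic-programming table lookups.
   Context: A TTM-tree is a finite rooted tree whose root carries the label ''input tensor'', with exactly $N$ leaves labelled bijectively by $\{1,\dots,N\}$, whose internal nodes (neither root nor leaf) are labelled by modes in $\{1,\dots,N\}$, and such that for each leaf labelled $n$ the root-to-leaf path contains exactly $N-1$ internal nodes, carrying every mode other than $n$. Cardinalities: $c(\text{root})=\prod_j L_j$, and for an internal node $u$ with label $n$ and parent $v$, $|\mathrm{In}(u)|=c(v)$ and $|\mathrm{Out}(u)|=c(u)=(K_n/L_n)c(v)$. A grid is an $N$-tuple $g=(q_1,\dots,q_N)$ of positive integers with $\prod_j q_j=P$; it is valid if $q_n\le K_n$ for all $n$. A dynamic grid scheme $\pi$ assigns a valid grid $\pi(u)$ to every node $u$ of $H$. Its volume is the sum over all internal nodes $u$ (with label $n$ and parent $v$) of $(q_n-1)\,|\mathrm{Out}(u)|$, where $q_n$ is the $n$-th entry of $\pi(u)$, plus $|\mathrm{In}(u)|$ if $\pi(u)\neq\pi(v)$ (regridding cost) and $0$ otherwise. The grid at the root is free (no regridding cost at the root). *)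

(* Defs.v *)
From HB Require Import structures.
From mathcomp Require Import all_boot all_order all_algebra.
Set Implicit Arguments.
Unset Strict Implicit.
Unset Printing Implicit Defensive.
Import Order.TTheory GRing.Theory Num.Theory.

Inductive tree (A : Type) := Nd of A & seq (tree A).
Arguments Nd {A}.

Fixpoint tree_nodes A (t : tree A) : nat :=
  let: Nd _ ts := t in (sumn (map (@tree_nodes A) ts)).+1.

Fixpoint tree_labels A (t : tree A) : seq A :=
  let: Nd a ts := t in a :: flatten (map (@tree_labels A) ts).

Fixpoint same_shape A B (t : tree A) (s : tree B) : bool :=
  let: Nd _ ts := t in let: Nd _ ss := s in
  (fix go (ts : seq (tree A)) (ss : seq (tree B)) : bool :=
     match ts, ss with
     | [::], [::] => true
     | t1 :: ts1, s1 :: ss1 => same_shape t1 s1 && go ts1 ss1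
     | _, _ => false
     end) ts ss.

(* TTM-trees.  A TTM-tree H is represented by the list of the subtrees *)
(* hanging from its root (the root, labelled "input tensor", carries no *)
(* mode).  A node with no children is a leaf; every other non-root node *)
(* is internal.  Modes are 'I_N (mode n+1 of the paper is n : 'I_N).    *)
Definition ttm_tree (N : nat) := seq (tree 'I_N).

Fixpoint leaf_paths N (t : tree 'I_N) : seq ('I_N * seq 'I_N) :=
  let: Nd n ts := t in
  if ts is [::] then [:: (n, [::])]
  else [seq (x.1, n :: x.2) | x <- flatten (map (@leaf_paths N) ts)].

Definition is_TTM N (H : ttm_tree N) : bool :=
  let lp := flatten (map (@leaf_paths N) H) in
  perm_eq (map fst lp) (enum 'I_N) &&
  all (fun x => (size x.2 == N.-1) &&
                all (fun m => (m != x.1) ==> (m \in x.2)) (enum 'I_N)) lp.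

(* |H| : number of nodes, root included *)
Definition ttm_size N (H : ttm_tree N) : nat := (sumn (map (@tree_nodes 'I_N) H)).+1.

Definition grid (N : nat) := {ffun 'I_N -> nat}.

Definition is_grid N (P : nat) (g : grid N) : bool :=
  [forall i, 0 < g i]%N && (\prod_i g i == P)%N.

Definition valid_grid N (P : nat) (K : 'I_N -> nat) (g : grid N) : bool :=
  is_grid P g && [forall n, g n <= K n]%N.

(* psi(P,N): number of ordered N-tuples of positive integers with product P.
   (Each entry of such a tuple is <= P, so they are enumerated in 'I_P.+1.) *)
Definition psi (P N : nat) : nat :=
  #|[set g : {ffun 'I_N -> 'I_P.+1} | [forall i, 0 < (g i : nat)]%N
                                     && (\prod_i (g i : nat) == P)%N]|.

(* A dynamic grid scheme: a grid at the root, and a tree of grids for each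
   root subtree (same shape as H). *)
Definition scheme N := (grid N * seq (tree (grid N)))%type.

Definition is_scheme N (P : nat) (K : 'I_N -> nat) (H : ttm_tree N) (pi : scheme N) : bool :=
  [&& valid_grid P K pi.1,
      (size H == size pi.2),
      all (fun p => same_shape p.1 p.2) (zip H pi.2)
    & all (fun s => all (valid_grid P K) (tree_labels s)) pi.2].

Local Open Scope ring_scope.

(* Volume contributed by the subtree t (schemed by s), whose parent has
   cardinality cp and grid gp.  Cardinalities are rationals, computed
   exactly as in the paper: c(u) = (K_n/L_n) c(v). *)
Fixpoint sub_volume N (L K : 'I_N -> nat) (cp : rat) (gp : grid N)
    (t : tree 'I_N) (s : tree (grid N)) : rat :=
  let: Nd n ts := t in let: Nd g ss := s in
  if ts is [::] then 0
  else
    let cu := ((K n)%:R / (L n)%:R) * cp in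
    ((g n)%:R - 1) * cu + (if g != gp then cp else 0)
    + (fix go (ts : seq (tree 'I_N)) (ss : seq (tree (grid N))) : rat :=
         match ts, ss with
         | t1 :: ts1, s1 :: ss1 => sub_volume L K cu g t1 s1 + go ts1 ss1
         | _, _ => 0
         end) ts ss.

Definition root_card N (L : 'I_N -> nat) : rat := (\prod_j L j)%N%:R.

Definition volume N (L K : 'I_N -> nat) (H : ttm_tree N) (pi : scheme N) : rat :=
  \sum_(p <- zip H pi.2) sub_volume L K (root_card L) pi.1 p.1 p.2.

(* The dynamic-programming algorithm, instrumented with a counter of    *)
(* DP-table lookups (a state monad over nat).                           *)
Definition M (A : Type) := nat -> A * nat.
Definition ret A (a : A) : M A := fun c => (a, c).
Definition bind A B (m : M A) (f : A -> M B) : M B :=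
  fun c => let: (a, c') := m c in f a c'.

Definition lookup (col : seq rat) (i : nat) : M rat :=
  fun c => (nth 0 col i, c.+1).

Fixpoint mapM A B (f : A -> M B) (s : seq A) : M (seq B) :=
  match s with
  | [::] => ret [::]
  | a :: s' => bind (f a) (fun b => bind (mapM f s') (fun bs => ret (b :: bs)))
  end.

(* (index, value) of a minimum entry of a column of size n >= 1 *)
Definition argminM (n : nat) (col : seq rat) : M (nat * rat) :=
  bind (lookup col 0) (fun v0 =>
  foldr (fun i (acc : M (nat * rat)) =>
           bind acc (fun bv => bind (lookup col i) (fun v =>
             ret (if v < bv.2 then (i, v) else bv))))
        (ret (0%N, v0)) (rev (iota 1 n.-1))).

Section DP.
Variables (N : nat) (L K : 'I_N -> nat) (Gs : seq (grid N)).

Definition nG := size Gs.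

(* combining the children w (columns cols, with precomputed minima mins)
   into the parent's entry at grid index i, where cpar = |In(w)| is the
   cardinality of the parent: one lookup per child *)
Definition sum_children (cpar : rat) (cols : seq (seq rat)) (mins : seq rat) (i : nat)
    : M rat :=
  bind (mapM (fun p => bind (lookup p.1 i) (fun same => ret (Num.min same (p.2 + cpar))))
             (zip cols mins)) (fun vs => ret (\sum_(v <- vs) v)).

Definition col_mins (cols : seq (seq rat)) : M (seq rat) :=
  mapM (fun c => bind (argminM nG c) (fun mv => ret mv.2)) cols.

(* bottom-up pass: table column T(u, .) for every node u of the subtree *)
Fixpoint dp_table (cp : rat) (t : tree 'I_N) : M (tree (seq rat)) :=
  let: Nd n ts := t in
  if ts is [::] then ret (Nd (nseq nG 0) [::])
  else
    let cu := ((K n)%:R / (L n)%:R) * cp in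
    bind ((fix go (ts : seq (tree 'I_N)) : M (seq (tree (seq rat))) :=
             match ts with
             | [::] => ret [::]
             | t1 :: ts1 => bind (dp_table cu t1) (fun r =>
                            bind (go ts1) (fun rs => ret (r :: rs)))
             end) ts) (fun tabs =>
    let cols := [seq (let: Nd c _ := tb in c) | tb <- tabs] in
    bind (col_mins cols) (fun mins =>
    bind (mapM (fun i => bind (sum_children cu cols mins i) (fun sc =>
            ret ((((nth [ffun => 0%N] Gs i) n)%:R - 1) * cu + sc)))
          (iota 0 nG)) (fun col =>
    ret (Nd col tabs)))).

(* top-down pass: given the grid index i of the parent (cardinality cpar),
   choose the grid index of child t (whose table is tb) and recurse *)
Fixpoint dp_rebuild (cpar : rat) (i : nat) (t : tree 'I_N) (tb : tree (seq rat))
    : M (tree (grid N)) :=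
  let: Nd n ts := t in let: Nd col tbs := tb in
  bind (lookup col i) (fun same =>
  bind (argminM nG col) (fun mw =>
  let j := if same <= mw.2 + cpar then i else mw.1 in
  let cu := ((K n)%:R / (L n)%:R) * cpar in
  bind ((fix go (ts : seq (tree 'I_N)) (tbs : seq (tree (seq rat)))
           : M (seq (tree (grid N))) :=
           match ts, tbs with
           | t1 :: ts1, b1 :: tbs1 => bind (dp_rebuild cu j t1 b1) (fun r =>
                                      bind (go ts1 tbs1) (fun rs => ret (r :: rs)))
           | _, _ => ret [::]
           end) ts tbs) (fun subs =>
  ret (Nd (nth [ffun => 0%N] Gs j) subs)))).

Definition dp_root (H : ttm_tree N) : M (option (scheme N)) :=
  if Gs is [::] then ret None else
  let c0 := root_card L in
  bind (mapM (dp_table c0) H) (fun tabs =>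
  let cols := [seq (let: Nd c _ := tb in c) | tb <- tabs] in
  bind (col_mins cols) (fun mins =>
  bind (mapM (sum_children c0 cols mins) (iota 0 nG)) (fun rootcol =>
  bind (argminM nG rootcol) (fun best =>
  bind (mapM (fun p => dp_rebuild c0 best.1 p.1 p.2) (zip H tabs)) (fun subs =>
  ret (Some (nth [ffun => 0%N] Gs best.1, subs))))))).

End DP.

(* all valid grids (enumeration only, no table lookups) *)
Definition valid_grids N (P : nat) (K : 'I_N -> nat) : seq (grid N) :=
  [seq h <- map (fun g : {ffun 'I_N -> 'I_P.+1} => [ffun i => (g i : nat)] : grid N)
                (enum {ffun 'I_N -> 'I_P.+1})
     | valid_grid P K h].

Definition ttm_dp N (L K : 'I_N -> nat) (P : nat) (H : ttm_tree N)
    : option (scheme N) * nat :=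
  dp_root L K (valid_grids P K) H 0%N.

(* Main.v *)
Require Import Defs.
From HB Require Import structures.
From mathcomp Require Import all_boot all_order all_algebra.
From mathcomp Require Import zify.
Import Order.TTheory GRing.Theory Num.Theory.
Local Open Scope ring_scope.
Set Implicit Arguments.
Unset Strict Implicit.
Unset Printing Implicit Defensive.

Inductive Fa A (P : A -> Prop) : seq A -> Prop :=
| Fa_nil : Fa P [::]
| Fa_cons a s : P a -> Fa P s -> Fa P (a :: s).

Inductive F2 A B (R : A -> B -> Prop) : seq A -> seq B -> Prop :=
| F2_nil : F2 R [::] [::]
| F2_cons a b s t : R a b -> F2 R s t -> F2 R (a :: s) (b :: t).

Lemma tree_ind' A (P : tree A -> Prop) :
  (forall a ts, Fa P ts -> P (Nd a ts)) -> forall t, P t.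
Proof.
move=> IH; fix F 1; case=> a ts; apply: IH; move: ts; fix G 1; case=> [|t ts].
  exact: Fa_nil.
exact: Fa_cons (F t) (G ts).
Qed.

Lemma Fa_impl A (P Q : A -> Prop) s : Fa P s -> (forall a, P a -> Q a) -> Fa Q s.
Proof. by elim=> [|a s' Pa _ IH] PQ; constructor; auto. Qed.

Lemma F2_size A B (R : A -> B -> Prop) s t : F2 R s t -> size s = size t.
Proof. by elim=> //= a b s' t' _ _ ->. Qed.

Lemma F2_map A B (g : A -> B) s t : F2 (fun a b => b = g a) s t -> t = map g s.
Proof. by elim=> //= a b s' t' -> _ ->. Qed.

Lemma F2_zip A B (R : A -> B -> Prop) s t : F2 R s t -> Fa (fun p => R p.1 p.2) (zip s t).
Proof. by elim=> /= [|a b s' t' Rab _ IH]; constructor. Qed.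

Definition HT A (m : M A) (Q : A -> Prop) (k : nat) :=
  forall c, exists a k', [/\ m c = (a, (c + k')%N), (k' <= k)%N & Q a].

Lemma HT_ret A (a : A) (Q : A -> Prop) k : Q a -> HT (ret a) Q k.
Proof. by move=> Qa c; exists a, 0%N; rewrite addn0. Qed.

Lemma HT_bind A B (m : M A) (f : A -> M B) Q Q' k k' kk :
  HT m Q k -> (forall a, Q a -> HT (f a) Q' k') -> (k + k' <= kk)%N ->
  HT (bind m f) Q' kk.
Proof.
move=> Hm Hf Hk c; have [a [k1 [E1 le1 Qa]]] := Hm c.
have [b [k2 [E2 le2 Qb]]] := Hf a Qa (c + k1)%N.
exists b, (k1 + k2)%N; split=> //; last by lia.
by rewrite /bind E1 E2 addnA.
Qed.

Lemma HT_lookup col i k : (1 <= k)%N -> HT (lookup col i) (fun v => v = nth 0 col i) k.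
Proof. by move=> k1 c; exists (nth 0 col i), 1%N; rewrite addn1. Qed.

Lemma HT_mapM A B (f : A -> M B) (R : A -> B -> Prop) (k : A -> nat) s kk :
  Fa (fun a => HT (f a) (R a) (k a)) s -> (sumn (map k s) <= kk)%N ->
  HT (mapM f s) (F2 R s) kk.
Proof.
move=> H; elim: H kk => [|a s' Ha Hs IH] kk /= Hk; first exact: HT_ret (F2_nil _).
apply: (HT_bind (k' := sumn (map k s')) Ha) => [b Rb|]; last exact: Hk.
apply: (HT_bind (k' := 0) (IH _ (leqnn _))) => [bs Rbs|]; last by rewrite addn0.
by apply: HT_ret; apply: F2_cons.
Qed.

Definition ismin n (col : seq rat) (v : rat) :=
  (exists2 j, (j < n)%N & v = nth 0 col j) /\ forall i, (i < n)%N -> v <= nth 0 col i.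

Lemma ismin_uniq n col v w : ismin n col v -> ismin n col w -> v = w.
Proof.
move=> [[j jn ->] Hv] [[j' jn' ->] Hw]; apply/eqP; rewrite eq_le; apply/andP; split.
  exact: Hv. exact: Hw.
Qed.

Lemma HT_argmin n col : (0 < n)%N ->
  HT (argminM n col) (fun p => [/\ (p.1 < n)%N, p.2 = nth 0 col p.1 & ismin n col p.2]) n.
Proof.
case: n => // n _; rewrite /argminM /=.
apply: (HT_bind (k' := n) (HT_lookup _ _ (leqnn 1))) => [v0 ->|//].
suff H : HT (foldr
     (fun (i : nat) (acc : M (nat * rat)) =>
      bind acc
        (fun bv : nat * rat =>
         bind (lookup col i)
           (fun v : rat => ret (if v < bv.2 then (i, v) else bv))))
     (ret (0%N, nth 0 col 0)) (rev (iota 1 n)))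
     (fun p => [/\ (p.1 < n.+1)%N, p.2 = nth 0 col p.1 & forall i, (i < n.+1)%N -> p.2 <= nth 0 col i]) n.
  move=> c; have [a [k [E le [H1 H2 H3]]]] := H c; exists a, k; split => //; split=> //.
  split=> //; by exists a.1.
elim: n => [|n IH].
  by apply: HT_ret; split=> //; case.
rewrite -[n.+1]addn1 iotaD rev_cat /=.
apply: (HT_bind (k' := 1) IH) => [[b bv] /= [Hb Hbv Hmin]|]; last by rewrite addn1.
apply: (HT_bind (k' := 0) (HT_lookup _ _ (leqnn 1))) => [v ->|]; last by [].
apply: HT_ret; rewrite addn1 add1n; case: ifP => /= [lt|nlt].
  split=> //.
  move=> i; rewrite ltnS leq_eqVlt => /orP [/eqP ->|lti] //.
  by apply: ltW; apply: lt_le_trans lt (Hmin _ lti).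
split=> //; first by apply: ltnW.
move=> i; rewrite ltnS leq_eqVlt => /orP [/eqP ->|lti]; last exact: Hmin.
by move/negbT: nlt; rewrite -leNgt.
Qed.

Lemma goE A B (f : A -> M B) ts :
  (fix go (ts : seq A) : M (seq B) :=
     match ts with
     | [::] => ret [::]
     | t1 :: ts1 => bind (f t1) (fun r => bind (go ts1) (fun rs => ret (r :: rs)))
     end) ts = mapM f ts.
Proof. by elim: ts => //= t ts ->. Qed.

Lemma go2E A A' B (f : A -> A' -> M B) ts tbs :
  (fix go (ts : seq A) (tbs : seq A') : M (seq B) :=
           match ts, tbs with
           | t1 :: ts1, b1 :: tbs1 => bind (f t1 b1) (fun r =>
                                      bind (go ts1 tbs1) (fun rs => ret (r :: rs)))
           | _, _ => ret [::]
           end) ts tbs = mapM (fun p => f p.1 p.2) (zip ts tbs).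
Proof. by elim: ts tbs => [|t ts IH] [|b tbs] //=; rewrite IH. Qed.

Lemma sumE A A' (f : A -> A' -> rat) ts ss :
  (fix go (ts : seq A) (ss : seq A') : rat :=
         match ts, ss with
         | t1 :: ts1, s1 :: ss1 => f t1 s1 + go ts1 ss1
         | _, _ => 0
         end) ts ss = \sum_(p <- zip ts ss) f p.1 p.2.
Proof.
elim: ts ss => [|t ts IH] [|s ss] /=; rewrite ?big_nil //.
by rewrite big_cons IH.
Qed.

Lemma shapeE A A' (f : A -> A' -> bool) ts ss :
  (fix go (ts : seq A) (ss : seq A') : bool :=
     match ts, ss with
     | [::], [::] => true
     | t1 :: ts1, s1 :: ss1 => f t1 s1 && go ts1 ss1
     | _, _ => false
     end) ts ss = (size ts == size ss) && all (fun p => f p.1 p.2) (zip ts ss).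
Proof.
elim: ts ss => [|t ts IH] [|s ss] //=; rewrite IH eqSS.
by case: (f t s); rewrite ?andbF.
Qed.

Lemma same_shapeE A B (a : A) (b : B) ts ss :
  same_shape (Nd a ts) (Nd b ss) =
  (size ts == size ss) && all (fun p => same_shape p.1 p.2) (zip ts ss).
Proof. by rewrite -(shapeE (@same_shape A B)). Qed.

Lemma all_flatten_map A B (p : pred B) (f : A -> seq B) s :
  all p (flatten (map f s)) = all (fun x => all p (f x)) s.
Proof. by elim: s => //= a s IH; rewrite all_cat IH. Qed.

Definition rlab A (t : tree A) := let: Nd a _ := t in a.

Section Main.
Variables (N : nat) (L K : 'I_N -> nat) (P : nat) (Gs : seq (grid N)).
Hypothesis HnG : (0 < nG Gs)%N.
Hypothesis Huniq : uniq Gs.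
Hypothesis HGs : forall g, valid_grid P K g = (g \in Gs).

Local Notation nG := (nG Gs).
Local Notation gi i := (nth [ffun => 0%N] Gs i).
Local Notation cuof n cp := ((K n)%:R / (L n)%:R * cp).

Definition valid_tree (s : tree (grid N)) := all (valid_grid P K) (tree_labels s).

Lemma valid_treeE g ss : valid_tree (Nd g ss) = valid_grid P K g && all valid_tree ss.
Proof. by rewrite /valid_tree /= all_flatten_map. Qed.

Lemma sub_volumeE cp gp (n : 'I_N) ts (g : grid N) ss :
  sub_volume L K cp gp (Nd n ts) (Nd g ss) =
  if ts is [::] then 0 else
  ((g n)%:R - 1) * cuof n cp + (if g != gp then cp else 0)
  + \sum_(p <- zip ts ss) sub_volume L K (cuof n cp) g p.1 p.2.
Proof. case: ts => // t ts. by rewrite -(sumE (sub_volume L K (cuof n cp) g)). Qed.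

Lemma dp_tableE (cp : rat) (n : 'I_N) (ts : seq (tree 'I_N)) : (0 < size ts)%N ->
  dp_table L K Gs cp (Nd n ts) =
  bind (mapM (dp_table L K Gs (cuof n cp)) ts) (fun tabs =>
    let cols := map (@rlab _) tabs in
    bind (col_mins Gs cols) (fun mins =>
    bind (mapM (fun i => bind (sum_children (cuof n cp) cols mins i) (fun sc =>
            ret ((((gi i) n)%:R - 1) * cuof n cp + sc)))
          (iota 0 nG)) (fun col =>
    ret (Nd col tabs)))).
Proof. case: ts => // t ts _. by rewrite -(goE (dp_table L K Gs (cuof n cp))). Qed.

Definition colmin (col : seq rat) := (argminM nG col 0%N).1.2.

Lemma colminP col : ismin nG col (colmin col).
Proof.
rewrite /colmin; have [a [k [-> _ [_ _ H]]]] := HT_argmin col HnG 0%N; exact: H.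
Qed.

Lemma colmin_eq col v : ismin nG col v -> v = colmin col.
Proof. move=> H; exact: ismin_uniq H (colminP col). Qed.

Definition childval (cp : rat) (tb : tree (seq rat)) (i : nat) :=
  Num.min (nth 0 (rlab tb) i) (colmin (rlab tb) + cp).

Lemma HT_col_mins cols :
  HT (col_mins Gs cols) (fun ms => ms = map colmin cols) (size cols * nG).
Proof.
rewrite /col_mins.
have H : HT (mapM (fun c => bind (argminM nG c) (fun mv => ret mv.2)) cols)
   (F2 (fun c m => m = colmin c) cols) (size cols * nG).
  apply: (HT_mapM (k := fun _ => nG)).
    elim: cols => [|c cols IH]; constructor => //.
    apply: (HT_bind (k' := 0) (HT_argmin c HnG)) => [[j v] /= [_ _ Hv]|]; last by rewrite addn0.
    by apply: HT_ret; apply: colmin_eq.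
  by elim: cols => //= c cols IH; rewrite mulSn leq_add2l.
move=> c; have [a [k [E le Ha]]] := H c; exists a, k; split=> //; exact: F2_map.
Qed.

Lemma HT_sum_children cu cols i :
  HT (sum_children cu cols (map colmin cols) i)
     (fun v => v = \sum_(c <- cols) Num.min (nth 0 c i) (colmin c + cu)) (size cols).
Proof.
rewrite /sum_children.
apply: (HT_bind (k' := 0) (k := size cols)
   (Q := F2 (fun p v => v = Num.min (nth 0 p.1 i) (p.2 + cu)) (zip cols (map colmin cols)))).
- apply: (HT_mapM (k := fun _ => 1%N)).
    elim: cols => [|c cols IH] /=; constructor => //.
    apply: (HT_bind (k' := 0) (HT_lookup _ _ (leqnn 1))) => [v ->|//].
    exact: HT_ret.
  by elim: cols => //= c cols IH.
- move=> vs /F2_map ->; apply: HT_ret.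
  by elim: cols => [|c cols IH] /=; rewrite ?big_nil // !big_cons IH.
- by rewrite addn0.
Qed.


Lemma F2_nil_inv A B (R : A -> B -> Prop) t : F2 R [::] t -> t = [::].
Proof. by move=> H; inversion H. Qed.

Lemma F2_cons_inv A B (R : A -> B -> Prop) a s t : F2 R (a :: s) t ->
  exists b t', [/\ t = b :: t', R a b & F2 R s t'].
Proof. move=> H; inversion H; subst; by exists b, t0. Qed.

Definition rcost (t : tree 'I_N) := (nG.+1 * tree_nodes t)%N.
Definition tcost (t : tree 'I_N) := (2 * nG * (tree_nodes t).-1)%N.

Definition Good cp (t : tree 'I_N) (tb : tree (seq rat)) : Prop := and
  (forall s i, same_shape t s -> valid_tree s -> (i < nG)%N ->
     childval cp tb i <= sub_volume L K cp (gi i) t s)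
  (forall i, (i < nG)%N ->
     HT (dp_rebuild L K Gs cp i t tb)
        (fun s => [/\ same_shape t s, valid_tree s & sub_volume L K cp (gi i) t s = childval cp tb i])
        (rcost t)).

Lemma gi_valid i : (i < nG)%N -> valid_grid P K (gi i).
Proof. by move=> ilt; rewrite HGs mem_nth. Qed.

Lemma gi_index g : valid_grid P K g -> exists2 j, (j < nG)%N & gi j = g.
Proof. rewrite HGs => gin; exists (index g Gs); [by rewrite index_mem | exact: nth_index]. Qed.

Lemma gi_neq i j : (i < nG)%N -> (j < nG)%N -> (i != j) -> (gi i != gi j).
Proof. by move=> ilt jlt; rewrite nth_uniq. Qed.

Lemma sum_lower cu j ts tabs ss : (j < nG)%N -> F2 (Good cu) ts tabs ->
  size ts = size ss -> all (fun p => same_shape p.1 p.2) (zip ts ss) -> all valid_tree ss ->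
  \sum_(tb <- tabs) childval cu tb j <= \sum_(p <- zip ts ss) sub_volume L K cu (gi j) p.1 p.2.
Proof.
move=> jn H; elim: H ss => [|t tb ts' tabs' [Hlow _] _ IH] [|s ss] //=; rewrite ?big_nil //.
rewrite !big_cons => [[hs]] /andP [sh shs] /andP [vs vss].
exact: lerD (Hlow s j sh vs jn) (IH ss hs shs vss).
Qed.

Lemma kids cu j ts tabs subs : F2 (Good cu) ts tabs ->
  F2 (fun p s => [/\ same_shape p.1 s, valid_tree s & sub_volume L K cu (gi j) p.1 s = childval cu p.2 j])
     (zip ts tabs) subs ->
  [/\ size ts = size subs, all (fun p => same_shape p.1 p.2) (zip ts subs), all valid_tree subs
    & \sum_(p <- zip ts subs) sub_volume L K cu (gi j) p.1 p.2 = \sum_(tb <- tabs) childval cu tb j].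
Proof.
move=> H; elim: H subs => [|t tb ts' tabs' _ _ IH] subs /=.
  by move/F2_nil_inv => ->; rewrite !big_nil.
case: subs => [|s subs'] Hs; first by inversion Hs.
have [sh vs sv] : [/\ same_shape t s, valid_tree s & sub_volume L K cu (gi j) t s = childval cu tb j].
  by inversion Hs.
have H2 : F2 (fun p s => [/\ same_shape p.1 s, valid_tree s & sub_volume L K cu (gi j) p.1 s = childval cu p.2 j])
     (zip ts' tabs') subs' by inversion Hs.
have [e1 e2 e3 e4] := IH _ H2.
by rewrite /= e1 sh vs e2 e3 !big_cons sv e4.
Qed.

Lemma sumn_rcost (ts : seq (tree 'I_N)) (tabs : seq (tree (seq rat))) : size ts = size tabs ->
  sumn (map (fun p => rcost p.1) (zip ts tabs)) = sumn (map rcost ts).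
Proof. by elim: ts tabs => [|t ts IH] [|tb tabs] //= [/IH ->]. Qed.

Lemma sumn_rcost2 (ts : seq (tree 'I_N)) :
  sumn (map rcost ts) = (nG.+1 * sumn (map (@tree_nodes _) ts))%N.
Proof. by elim: ts => [|t ts IH] /=; rewrite ?muln0 // IH mulnDr. Qed.

Lemma dp_rebuild_unf cpar i n ts col tbs :
  dp_rebuild L K Gs cpar i (Nd n ts) (Nd col tbs) =
  bind (lookup col i) (fun same =>
  bind (argminM nG col) (fun mw =>
  let j := if same <= mw.2 + cpar then i else mw.1 in
  let cu := cuof n cpar in
  bind ((fix go (ts : seq (tree 'I_N)) (tbs : seq (tree (seq rat)))
           : M (seq (tree (grid N))) :=
           match ts, tbs with
           | t1 :: ts1, b1 :: tbs1 => bind (dp_rebuild L K Gs cu j t1 b1) (fun r =>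
                                      bind (go ts1 tbs1) (fun rs => ret (r :: rs)))
           | _, _ => ret [::]
           end) ts tbs) (fun subs =>
  ret (Nd (gi j) subs)))).
Proof. reflexivity. Qed.

Lemma rebuild_ok cp n ts col tabs i : 0 <= cp -> (i < nG)%N -> F2 (Good (cuof n cp)) ts tabs ->
  (forall j, (j < nG)%N -> nth 0 col j = if ts is [::] then 0 else
      ((gi j n)%:R - 1) * cuof n cp + \sum_(tb <- tabs) childval (cuof n cp) tb j) ->
  HT (dp_rebuild L K Gs cp i (Nd n ts) (Nd col tabs))
     (fun s => [/\ same_shape (Nd n ts) s, valid_tree s &
                   sub_volume L K cp (gi i) (Nd n ts) s = childval cp (Nd col tabs) i])
     (rcost (Nd n ts)).
Proof.
move=> cp0 ilt H2 Hcol.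
rewrite dp_rebuild_unf.
apply: (HT_bind (k' := (nG + sumn (map (@rcost) ts))%N) (HT_lookup col i (leqnn 1))) => [same ->|].
apply: (HT_bind (k' := sumn (map (@rcost) ts)) (HT_argmin col HnG)) => [[j0 m] [Hj0 Hm Hmin]|//].
rewrite /fst /snd in Hj0 Hm Hmin.
cbv zeta.
set j := (if _ <= _ then i else j0).
rewrite (go2E (dp_rebuild L K Gs (cuof n cp) j)).
have jlt : (j < nG)%N by rewrite /j; case: ifP.
set R := (fun (p : tree 'I_N * tree (seq rat)) s => [/\ same_shape p.1 s, valid_tree s
          & sub_volume L K (cuof n cp) (gi j) p.1 s = childval (cuof n cp) p.2 j]).
have HF : Fa (fun p => HT (dp_rebuild L K Gs (cuof n cp) j p.1 p.2) (R p) (rcost p.1)) (zip ts tabs).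
  apply: (Fa_impl (F2_zip H2)) => p [_ Hp]; exact: Hp jlt.
apply: (HT_bind (k' := 0) (HT_mapM HF (leqnn _))) => [subs Hsubs|]; last first.
  by rewrite addn0 sumn_rcost // (F2_size H2).
- have [e1 e2 e3 e4] := kids H2 Hsubs.
  apply: HT_ret; split.
  + by rewrite same_shapeE e1 eqxx e2.
  + by rewrite valid_treeE gi_valid // e3.
  rewrite sub_volumeE e4 /childval /= -(colmin_eq Hmin).
  have Hci := Hcol i ilt; have Hcj := Hcol j jlt; have Hcj0 := Hcol j0 Hj0.
  case Ets: ts Hci Hcj Hcj0 => [|t ts'] Hci Hcj Hcj0.
    by rewrite Hci Hm Hcj0 add0r minEle cp0.
  rewrite addrAC -Hcj /j /=; case: ifP => [le|nle].
    by rewrite eqxx addr0 minEle le.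
  have ne : j0 != i.
    by apply/eqP => e; move: nle; rewrite -e -Hm lerDl cp0.
  by rewrite gi_neq // -Hm minEle nle.
rewrite sumn_rcost2 /rcost /=; lia.
Qed.

Lemma Fa_all A (Q : A -> Prop) s : (forall a, Q a) -> Fa Q s.
Proof. by move=> H; elim: s => [|a s IH]; constructor. Qed.

Lemma sumn_const A (c : nat) (s : seq A) : sumn (map (fun _ => c) s) = (size s * c)%N.
Proof. by elim: s => //= a s ->; rewrite mulSn. Qed.

Lemma tcost_sum (ts : seq (tree 'I_N)) :
  (sumn (map tcost ts) + 2 * nG * size ts = 2 * nG * sumn (map (@tree_nodes _) ts))%N.
Proof.
elim: ts => //= -[a l] ts IH; rewrite /tcost /= -/(tcost _) in IH *.
move: IH; set y := (2 * nG)%N; nia.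
Qed.

Lemma table_ok t : forall cp, 0 <= cp -> HT (dp_table L K Gs cp t) (Good cp t) (tcost t).
Proof.
elim/tree_ind': t => n ts IH cp cp0.
have cu0 : 0 <= cuof n cp by apply: mulr_ge0 => //; apply: divr_ge0; apply: ler0n.
case Ets: ts IH => [|t0 ts0] IH.
  apply: HT_ret; split.
    move=> [g ss] i _ _ ilt; rewrite sub_volumeE /childval /= nth_nseq ilt.
    by rewrite ge_min lexx.
  move=> i ilt; apply: rebuild_ok => //; first exact: F2_nil.
  by move=> j jlt; rewrite nth_nseq jlt.
move: IH; rewrite -Ets => IH.
rewrite dp_tableE; last by rewrite Ets.
have HF : Fa (fun t => HT (dp_table L K Gs (cuof n cp) t) (Good (cuof n cp) t) (tcost t)) ts.
  by apply: (Fa_impl IH) => t Ht; exact: Ht _ cu0.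
apply: (HT_bind (k' := (size ts * nG + nG * size ts)%N) (HT_mapM HF (leqnn _))) => [tabs Htabs|]; last first.
  have := tcost_sum ts; rewrite /tcost /= => <-; lia.
have Hsz := F2_size Htabs.
apply: (HT_bind (k' := (nG * size ts)%N) (HT_col_mins _)) => [mins ->|]; last first.
  by rewrite size_map Hsz.
set f := fun i => ((gi i n)%:R - 1) * cuof n cp + \sum_(tb <- tabs) childval (cuof n cp) tb i.
have HF2 : Fa (fun i => HT (bind (sum_children (cuof n cp) (map (@rlab _) tabs) (map colmin (map (@rlab _) tabs)) i)
      (fun sc => ret ((((gi i) n)%:R - 1) * cuof n cp + sc))) (fun v => v = f i) (size ts)) (iota 0 nG).
  apply: Fa_all => i.
  apply: (HT_bind (k' := 0) (HT_sum_children _ _ _)) => [v ->|]; last by rewrite size_map Hsz addn0.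
  by apply: HT_ret; rewrite /f big_map.
apply: (HT_bind (k' := 0) (HT_mapM HF2 (leqnn _))) => [col /F2_map Hcol|]; last first.
  by rewrite sumn_const size_iota addn0 mulnC.
have colE k : (k < nG)%N -> nth 0 col k = f k.
  by move=> klt; rewrite Hcol (nth_map 0%N) ?size_iota // nth_iota.
apply: HT_ret; split.
  move=> [g ss] i sh vs ilt.
  rewrite same_shapeE in sh; case/andP: sh => /eqP hs shs.
  rewrite valid_treeE in vs; case/andP: vs => vg vss.
  have [j jlt gj] := gi_index vg.
  have Hsum := sum_lower jlt Htabs hs shs vss; rewrite gj in Hsum.
  rewrite sub_volumeE Ets -Ets /childval /=.
  case: (eqVneq j i) => [ji|jni].
    rewrite ge_min; apply/orP; left.
    rewrite colE // /f -ji gj eqxx addr0 lerD2l; exact: Hsum.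
  rewrite ge_min; apply/orP; right.
  have cm := (colminP col).2 j jlt.
  apply: le_trans (lerD cm (lexx cp)) _.
  rewrite colE // /f -gj gi_neq //.
  by rewrite gj [X in _ <= X]addrAC lerD2r lerD2l.
move=> i ilt; apply: rebuild_ok => //.
by move=> j jlt; rewrite colE // Ets.
Qed.

Lemma HT_weak A (m : M A) (Q Q' : A -> Prop) k k' :
  HT m Q k -> (forall a, Q a -> Q' a) -> (k <= k')%N -> HT m Q' k'.
Proof.
move=> H QQ kk c; have [a [k1 [E le Qa]]] := H c.
exists a, k1; split=> //; [exact: leq_trans kk | exact: QQ].
Qed.

Lemma size_le_nodes (ts : seq (tree 'I_N)) : (size ts <= sumn (map (@tree_nodes _) ts))%N.
Proof. by elim: ts => //= -[a l] ts IH /=; rewrite ltnS; apply: leq_trans IH (leq_addl _ _). Qed.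

Lemma root_ok (H : ttm_tree N) :
  HT (dp_root L K Gs H)
     (fun o => match o with
               | Some pi => is_scheme P K H pi /\
                   forall pi' : scheme N, is_scheme P K H pi' -> volume L K H pi <= volume L K H pi'
               | None => False end)
     (6 * nG * ttm_size H).
Proof.
set c0 := root_card L.
have -> : dp_root L K Gs H =
  bind (mapM (dp_table L K Gs c0) H) (fun tabs =>
  let cols := map (@rlab _) tabs in
  bind (col_mins Gs cols) (fun mins =>
  bind (mapM (sum_children c0 cols mins) (iota 0 nG)) (fun rootcol =>
  bind (argminM nG rootcol) (fun best =>
  bind (mapM (fun p => dp_rebuild L K Gs c0 best.1 p.1 p.2) (zip H tabs)) (fun subs =>
  ret (Some (gi best.1, subs))))))).
  by rewrite /dp_root; case E: Gs HnG => [|g0 Gs'].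
have c00 : 0 <= c0 by apply: ler0n.
set d := size H.
set S := sumn (map (@tree_nodes _) H).
have HF : Fa (fun t => HT (dp_table L K Gs c0 t) (Good c0 t) (tcost t)) H.
  by apply: Fa_all => t; apply: table_ok.
apply: (HT_bind (k' := (d * nG + (nG * d + (nG + sumn (map rcost H))))%N) (HT_mapM HF (leqnn _))) => [tabs Htabs|]; last first.
  have := tcost_sum H; have := sumn_rcost2 H; have := size_le_nodes H.
  have := leq_pmull S HnG.
  rewrite /ttm_size -/S -/d => h1 h2 -> h3. nia.
have Hsz := F2_size Htabs.
apply: (HT_bind (k' := (nG * d + (nG + sumn (map rcost H)))%N) (HT_col_mins _)) => [mins ->|]; last first.
  by rewrite size_map -Hsz mulnC.
set g := fun i => \sum_(tb <- tabs) childval c0 tb i.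
have HF2 : Fa (fun i => HT (sum_children c0 (map (@rlab _) tabs) (map colmin (map (@rlab _) tabs)) i)
      (fun v => v = g i) d) (iota 0 nG).
  apply: Fa_all => i; apply: (HT_weak (HT_sum_children _ _ _)) => [v ->|].
    by rewrite /g big_map.
  by rewrite size_map -Hsz.
apply: (HT_bind (k' := (nG + sumn (map rcost H))%N) (HT_mapM HF2 (leqnn _))) => [rc /F2_map Hrc|]; last first.
  by rewrite sumn_const size_iota mulnC.
have rcE k : (k < nG)%N -> nth 0 rc k = g k.
  by move=> klt; rewrite Hrc (nth_map 0%N) ?size_iota // nth_iota.
apply: (HT_bind (k' := sumn (map rcost H)) (HT_argmin rc HnG)) => [[b bv] [Hb Hbv Hbmin]|//].
rewrite /fst /snd in Hb Hbv Hbmin.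
set R := (fun (p : tree 'I_N * tree (seq rat)) s => [/\ same_shape p.1 s, valid_tree s
          & sub_volume L K c0 (gi b) p.1 s = childval c0 p.2 b]).
have HF3 : Fa (fun p => HT (dp_rebuild L K Gs c0 b p.1 p.2) (R p) (rcost p.1)) (zip H tabs).
  apply: (Fa_impl (F2_zip Htabs)) => p [_ Hp]; exact: Hp Hb.
apply: (HT_bind (k' := 0) (HT_mapM HF3 (leqnn _))) => [subs Hsubs|]; last first.
  by rewrite addn0 sumn_rcost.
have [e1 e2 e3 e4] := kids Htabs Hsubs.
apply: HT_ret; split.
  by rewrite /is_scheme /= gi_valid // e1 eqxx e2.
move=> [g' ss'] /and4P [/= vg /eqP hs shs vss].
have [j jlt gj] := gi_index vg.
have Hsum := sum_lower jlt Htabs hs shs vss; rewrite gj in Hsum.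
rewrite /volume /= e4.
apply: le_trans Hsum.
by have := Hbmin.2 j jlt; rewrite Hbv !rcE.
Qed.

End Main.


Lemma vg_le P N (K : 'I_N -> nat) (g : grid N) i : valid_grid P K g -> (0 < P)%N -> (g i <= P)%N.
Proof.
case/andP => /andP [_ /eqP hp] _ P0.
have : (g i %| P)%N by rewrite -hp (bigD1 i) //= dvdn_mulr.
by move/dvdn_leq; apply.
Qed.

Lemma valid_grids_mem P N (K : 'I_N -> nat) g : (0 < P)%N ->
  (g \in valid_grids P K) = valid_grid P K g.
Proof.
move=> P0; rewrite mem_filter; case V: (valid_grid P K g) => //=.
apply/mapP; exists [ffun i => inord (g i) : 'I_P.+1]; first by rewrite mem_enum.
apply/ffunP => i; rewrite !ffunE inordK // ltnS; exact: vg_le V P0.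
Qed.

Lemma valid_grids_uniq P N (K : 'I_N -> nat) : uniq (valid_grids P K).
Proof.
apply: filter_uniq; rewrite map_inj_uniq ?enum_uniq //.
move=> g1 g2 /ffunP E; apply/ffunP => i; apply/val_inj; by have := E i; rewrite !ffunE.
Qed.

Lemma valid_grids_size P N (K : 'I_N -> nat) : (size (valid_grids P K) <= psi P N)%N.
Proof.
rewrite size_filter count_map /psi.
rewrite cardE /enum_mem size_filter count_filter.
apply: sub_count => g /= /andP [V _].
rewrite inE; move: V; rewrite /valid_grid /is_grid => /andP [/andP [/forallP pos /eqP pr] _].
apply/andP; split.
  by apply/forallP => i; have := pos i; rewrite ffunE.
by apply/eqP; apply: etrans _ pr; apply: eq_bigr => i _; rewrite ffunE.
Qed.

Theorem mainTheorem3 :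
  exists C : nat,
  forall (N : nat) (L K : 'I_N -> nat) (P : nat) (H : ttm_tree N),
    (1 <= N)%N ->
    (forall n, 0 < K n)%N ->
    (forall n, 0 < L n)%N ->
    (forall n, K n <= L n)%N ->
    (0 < P)%N ->
    is_TTM H ->
    ((ttm_dp L K P H).2 <= C * (ttm_size H * psi P N))%N /\
    match (ttm_dp L K P H).1 with
    | Some pi =>
        is_scheme P K H pi /\
        forall pi' : scheme N, is_scheme P K H pi' ->
          volume L K H pi <= volume L K H pi'
    | None => forall pi' : scheme N, ~~ is_scheme P K H pi'
    end.
Proof.
exists 6%N => N L K P H _ _ _ _ P0 _.
have HGs : forall g, valid_grid P K g = (g \in valid_grids P K).
  by move=> g; rewrite valid_grids_mem.
have Hu := valid_grids_uniq P K.
have Hsz := valid_grids_size P K.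
rewrite /ttm_dp.
case: (posnP (size (valid_grids P K))) => [Hz|HnG].
  rewrite (size0nil Hz) /=; split => // pi'.
  by rewrite /is_scheme HGs (size0nil Hz).
have [a [k [E le Ha]]] := @root_ok N L K P (valid_grids P K) HnG Hu HGs H 0%N.
rewrite E /=; split.
  apply: leq_trans le _; rewrite /nG -mulnA leq_mul2l /= mulnC leq_mul2l Hsz orbT //.
by case: a {E} Ha.
Qed.
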